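(* For any composition $\beta$ of an even positive integer, \[\sum_{\substack{\alpha\le\beta\\ a_1,a_k\ \text{odd}}}(-1)^{k_e(\alpha)}\,2^{k_o(\beta)-k_o(\alpha)+1}\,C\bigl(k_o(\alpha)/2-1\bigr)=2^{k_o(\beta)}-\binom{k_o(\beta)}{k_o(\beta)/2},\] where the sum is over those compositions $\alpha=(a_1,\ldots,a_k)$ whose first and last parts are odd and which are refined by $\beta$.
   Context: A composition is a finite sequence of positive integers; $k_e(\alpha)$, $k_o(\alpha)$ are its numbers of even and odd parts. $\alpha\le\beta$ means $\beta$ refines $\alpha$ (obtained from $\alpha$ by splitting parts), including $\alpha=\beta$. $C(j)=\frac{1}{j+1}\binom{2j}{j}$ is the Catalan number. *)

(* Defs.v *)
From mathcomp Require Import all_boot all_order all_algebra.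
Set Implicit Arguments. Unset Strict Implicit. Unset Printing Implicit Defensive.

Definition is_composition (a : seq nat) : bool := all (fun x => 0 < x) a.

Definition k_e (a : seq nat) : nat := count (fun x => ~~ odd x) a.
Definition k_o (a : seq nat) : nat := count odd a.

(* refines a b : b refines a (a <= b), i.e. b is obtained from a by splitting
   parts: b is cut into consecutive nonempty blocks whose sums are the parts
   of a (in order). *)
Fixpoint refines (a b : seq nat) : bool :=
  match a with
  | [::] => b == [::]
  | x :: a' => has (fun j => (sumn (take j b) == x) && refines a' (drop j b))
                   (iota 1 (size b))
  end.

Fixpoint comps_aux (fuel n : nat) : seq (seq nat) :=
  match fuel with
  | 0 => if n == 0 then [:: [::]] else [::]
  | fuel'.+1 =>
      if n == 0 then [:: [::]]
      else flatten [seq map (cons k) (comps_aux fuel' (n - k)) | k <- iota 1 n]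
  end.
Definition compositions (n : nat) : seq (seq nat) := comps_aux n n.

Definition catalan (j : nat) : nat := 'C(j.*2, j) %/ j.+1.

(* Main.v *)
Require Import Defs.
From mathcomp Require Import all_boot all_order all_algebra.
From mathcomp Require Import zify lra.
Import GRing.Theory Num.Theory.
Set Implicit Arguments. Unset Strict Implicit. Unset Printing Implicit Defensive.

Definition glue (b : nat) (a : seq nat) : seq nat :=
  if a is a0 :: a' then (b + a0) :: a' else [:: b].

Fixpoint coars (s : seq nat) : seq (seq nat) :=
  match s with
  | [::] => [:: [::]]
  | b :: r => if r is [::] then [:: [:: b]]
              else map (cons b) (coars r) ++ map (glue b) (coars r)
  end.

Lemma coars_cons2 b c r : coars (b :: c :: r) =
  map (cons b) (coars (c :: r)) ++ map (glue b) (coars (c :: r)).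
Proof. by []. Qed.

Lemma map_glue b c r : map (glue b) (coars (c :: r)) = coars ((b + c) :: r).
Proof.
case: r => [|d r] //.
rewrite !coars_cons2 map_cat -!map_comp; congr (_ ++ _); apply: eq_map => a //=.
by case: a => [|a0 a'] //=; rewrite addnA.
Qed.

Lemma coars_ne b r a : a \in coars (b :: r) -> exists a0 a', a = a0 :: a'.
Proof.
case: r => [|c r]; first by rewrite inE => /eqP ->; eauto.
rewrite coars_cons2 mem_cat => /orP [] /mapP [x _ ->]; first by eauto.
case: x => [|x0 x'] /=; eauto.
Qed.

Lemma coars_sum s a : a \in coars s -> sumn a = sumn s.
Proof.
elim: s a => [|b r IH] a; first by rewrite inE => /eqP ->.
case: r IH => [|c r] IH; first by rewrite inE => /eqP ->.
rewrite coars_cons2 mem_cat => /orP [] /mapP [x xin ->] /=.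
  by rewrite (IH _ xin).
have [x0 [x' Ex]] := coars_ne xin.
by move: (IH _ xin); rewrite Ex /= => <-; rewrite addnA.
Qed.

Lemma coars_comp s a : is_composition s -> a \in coars s -> is_composition a.
Proof.
elim: s a => [|b r IH] a; first by move=> _; rewrite inE => /eqP ->.
move=> Hbr; have /andP [b0 Hr] : (0 < b) && is_composition r := Hbr.
case: r IH Hbr Hr => [|c r] IH Hbr Hr; first by rewrite inE => /eqP -> /=; rewrite b0.
rewrite coars_cons2 mem_cat => /orP [] /mapP [x xin ->] /=.
  by rewrite b0 (IH _ Hr xin).
have [x0 [x' Ex]] := coars_ne xin.
move: (IH _ Hr xin); rewrite Ex /= => /andP [_ ->].
by rewrite addn_gt0 b0.
Qed.

Lemma coars_uniq s : is_composition s -> uniq (coars s).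
Proof.
elim: s => [|b r IH] //.
move=> Hbr; have /andP [b0 Hr] : (0 < b) && is_composition r := Hbr.
case: r IH Hbr Hr => [|c r] IH Hbr Hr //.
rewrite coars_cons2 cat_uniq; apply/and3P; split.
- by rewrite map_inj_uniq ?IH // => x y [].
- apply/hasPn => y /mapP [x xin ->]; apply/negP => /mapP [z _].
  have [x0 [x' Ex]] := coars_ne xin.
  have := coars_comp Hr xin; rewrite Ex /= => /andP [x00 _] [].
  by move=> /eqP; rewrite -{2}(addn0 b) eqn_add2l => /eqP E; rewrite E in x00.
- rewrite map_inj_in_uniq ?IH // => x y xin yin.
  have [x0 [x' ->]] := coars_ne xin; have [y0 [y' ->]] := coars_ne yin.
  by move=> /= [] /addnI -> ->.
Qed.

Lemma refines_cons x a' s : refines (x :: a') s =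
  has (fun j => (sumn (take j s) == x) && refines a' (drop j s)) (iota 1 (size s)).
Proof. by []. Qed.

Lemma coars_refines s a : a \in coars s -> refines a s.
Proof.
elim: s a => [|b r IH] a; first by rewrite inE => /eqP ->.
case: r IH => [|c r] IH; first by rewrite inE => /eqP -> /=; rewrite addn0 eqxx.
rewrite coars_cons2 mem_cat => /orP [] /mapP [x xin ->].
  rewrite refines_cons; apply/hasP; exists 1; first by rewrite mem_iota.
  by rewrite /= addn0 eqxx; exact: IH.
have [x0 [x' Ex]] := coars_ne xin.
have := IH _ xin; rewrite Ex refines_cons => /hasP [j].
rewrite mem_iota => /andP [j1 js] /andP [Hs Hr].
rewrite [glue _ _]/= refines_cons; apply/hasP; exists j.+1.
  by rewrite mem_iota /= ltnS (leq_trans js).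
by rewrite [take _ _]/= [drop _ _]/= [sumn _]/= (eqP Hs) eqxx.
Qed.

Lemma refines_coars s a : refines a s -> a \in coars s.
Proof.
elim: s a => [|b r IH] a.
  by case: a => [|x a'] //=; rewrite inE.
case: a => [|x a'] H; first by move: H => /=.
move: H; rewrite refines_cons => /hasP [j]; rewrite mem_iota => /andP [j1 js] /andP [Hs Hr].
case: j j1 js Hs Hr => [|[|j]] // _ js Hs Hr.
  move: Hs Hr; rewrite [take _ _]/= [drop _ _]/= take0 drop0 [sumn _]/= addn0 => /eqP <- Hr.
  have := IH _ Hr; case: r {IH js Hr} => [|c r].
    by rewrite inE => /eqP ->; rewrite inE.
  by move=> H; rewrite coars_cons2 mem_cat map_f.
case: r IH js Hs Hr => [|c r] IH js; first by rewrite /= in js.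
rewrite [take _ _]/= [drop _ _]/= => Hs Hr.
have H : refines (sumn (take j.+1 (c :: r)) :: a') (c :: r).
  rewrite refines_cons; apply/hasP; exists j.+1; first by rewrite mem_iota /= ltnS -ltnS.
  by rewrite eqxx Hr.
rewrite coars_cons2 mem_cat; apply/orP; right; apply/mapP.
exists (sumn (take j.+1 (c :: r)) :: a'); first exact: IH.
by rewrite /= -(eqP Hs).
Qed.

Lemma uniq_flatten_cons (s : seq nat) (L : nat -> seq (seq nat)) :
  uniq s -> (forall k, uniq (L k)) ->
  uniq (flatten [seq map (cons k) (L k) | k <- s]).
Proof.
elim: s => [|k s IH] //= /andP [ks us] UL.
rewrite cat_uniq; apply/and3P; split.
- by rewrite map_inj_uniq ?UL // => ? ? [].
- apply/hasPn => y /flattenP [l /mapP [k' k's ->] /mapP [z _ ->]].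
  apply/negP => /mapP [w _ [Ek _]].
  by move: ks; rewrite -Ek k's.
- exact: IH.
Qed.

Lemma comps_uniq fuel n : uniq (comps_aux fuel n).
Proof.
elim: fuel n => [|f IH] n /=; first by case: (n == 0).
case: (n == 0) => //; apply: uniq_flatten_cons => //; exact: iota_uniq.
Qed.

Lemma comps_mem fuel a : is_composition a -> sumn a <= fuel ->
  a \in comps_aux fuel (sumn a).
Proof.
elim: fuel a => [|f IH] [|x a'] //= /andP [x0 Ha]; try by rewrite inE.
- by rewrite leqn0 addn_eq0 => /andP [/eqP E _]; rewrite E in x0.
- move=> Hs; have -> : (x + sumn a' == 0) = false.
    by apply/negbTE; rewrite addn_eq0 negb_and -lt0n x0.
  apply/flattenP; exists (map (cons x) (comps_aux f (x + sumn a' - x))).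
    apply/mapP; exists x => //; rewrite mem_iota x0 /=.
    by rewrite add1n ltnS leq_addr.
  rewrite addKn map_f // IH //.
  by rewrite -ltnS (leq_trans _ Hs) // -addn1 addnC leq_add2r.
Qed.



Lemma bin_rec m : 'C((m.+1).*2, m.+1) + 2 * catalan m = 4 * 'C(m.*2, m).
Proof.
set X := 'C(m.*2, m); set Y := 'C(m.*2, m.+1).
have Em : m.*2 - m = m by rewrite -addnn addnK.
have H1 : m.+1 * Y = m * X by rewrite /Y mul_bin_left Em.
have HYX : Y <= X.
  by rewrite -(leq_pmul2l (ltn0Sn m)) H1 leq_mul2r leqnSn orbT.
have Hc : catalan m = X - Y.
  rewrite /catalan -/X.
  have E : X = m.+1 * (X - Y) by rewrite mulnBr H1 -mulnBl subSnn mul1n.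
  by rewrite {1}E mulKn.
have HC : 'C((m.+1).*2, m.+1) = 2 * (X + Y).
  rewrite doubleS binS.
  have -> : 'C((m.*2).+1, m) = 'C((m.*2).+1, m.+1).
    rewrite -{1}(bin_sub (n := (m.*2).+1) (m := m.+1)); last by rewrite ltnS -addnn leq_addl.
    by rewrite subSS Em.
  by rewrite binS -/X -/Y; lia.
rewrite HC Hc; lia.
Qed.


Lemma odd_sumn s : odd (sumn s) = odd (k_o s).
Proof.
elim: s => //= x s IH; rewrite /k_o /= oddD IH oddD -/(k_o s).
by case: (odd x).
Qed.


Local Open Scope ring_scope.

Lemma sum_refines (beta : seq nat) (G : seq nat -> int) :
  is_composition beta ->
  \sum_(alpha <- compositions (sumn beta) | refines alpha beta) G alpha =
  \sum_(alpha <- coars beta) G alpha.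
Proof.
move=> Hb; rewrite -big_filter; apply: perm_big; apply: uniq_perm.
- by rewrite filter_uniq // comps_uniq.
- exact: coars_uniq.
move=> a; rewrite mem_filter; apply/andP/idP => [[H _]|H].
  exact: refines_coars.
split; first exact: coars_refines.
rewrite /compositions -(coars_sum H) comps_mem //; first exact: coars_comp Hb H.
Qed.

Lemma G_lem r : forall b (f : nat -> int),
  \sum_(a <- coars (b :: r))
     (if odd (last 0%N a) then (-1) ^+ k_e a * f (k_o a) else 0)
  = if odd b then f (k_o (b :: r)) else 0.
Proof.
elim: r => [|c r IH] b f.
  rewrite /= big_cons big_nil /k_e /k_o /=.
  by case: (odd b) => /=; rewrite ?expr0 ?mul1r ?addr0.
rewrite coars_cons2 map_glue big_cat big_map IH.
have -> : \sum_(a <- coars (c :: r))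
     (if odd (last 0%N (b :: a)) then (-1) ^+ k_e (b :: a) * f (k_o (b :: a)) else 0)
  = (-1) ^+ (~~ odd b) * \sum_(a <- coars (c :: r))
     (if odd (last 0%N a) then (-1) ^+ k_e a * f (odd b + k_o a)%N else 0).
  rewrite big_distrr /=; apply: eq_big_seq => a ain.
  have [a0 [a' ->]] := coars_ne ain.
  rewrite /k_e /k_o /=; case: ifP => _; last by rewrite mulr0.
  by rewrite exprD mulrA.
rewrite (IH c (fun n => f (odd b + n)%N)) /k_o /= oddD.
case: (odd b); case: (odd c) => /=;
  by rewrite ?expr0 ?expr1 ?mul1r ?mulN1r ?mulr0 ?add0n ?addr0 ?add0r ?addNr.
Qed.

Lemma H_lem r : forall b (f : nat -> int),
  \sum_(a <- coars (b :: r))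
     (if odd (head 0%N a) && odd (last 0%N a) then (-1) ^+ k_e a * f (k_o a) else 0)
  = \sum_(i < uphalf (k_o (b :: r))) f (k_o (b :: r) - i.*2)%N.
Proof.
elim: r => [|c r IH] b f.
  rewrite /= big_cons big_nil /k_e /k_o /=.
  case: (odd b) => /=; last by rewrite big_ord0 addr0.
  by rewrite big_ord_recl big_ord0 expr0 mul1r !addr0.
rewrite coars_cons2 map_glue big_cat big_map IH.
have -> : \sum_(a <- coars (c :: r))
     (if odd (head 0%N (b :: a)) && odd (last 0%N (b :: a))
      then (-1) ^+ k_e (b :: a) * f (k_o (b :: a)) else 0)
  = if odd b then \sum_(a <- coars (c :: r))
     (if odd (last 0%N a) then (-1) ^+ k_e a * f (1 + k_o a)%N else 0) else 0.
  case: (boolP (odd b)) => hb.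
    apply: eq_big_seq => a ain.
    have [a0 [a' ->]] := coars_ne ain.
    by rewrite /k_e /k_o /= hb /=.
  by rewrite big1_seq // => a /andP [_ ain] /=; rewrite (negbTE hb).
rewrite (G_lem r c (fun n => f (1 + n)%N)) /k_o /= oddD.
case: (odd b); case: (odd c) => /=; rewrite ?add0r ?add0n //.
by rewrite big_ord_recl subn0; congr (_ + _).
Qed.
Lemma cat_sum m : \sum_(i < m) (2 ^+ (i.*2.+1) * (catalan (m - i - 1))%:R : int)
  = 2 ^+ (m.*2) - ('C(m.*2, m))%:R.
Proof.
elim: m => [|m IH]; first by rewrite big_ord0 bin0 expr0 subrr.
rewrite big_ord_recl.
have -> : \sum_(i < m) (2 ^+ (bump 0 i).*2.+1 * (catalan (m.+1 - bump 0 i - 1))%:R : int)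
   = 4 * \sum_(i < m) (2 ^+ (i.*2.+1) * (catalan (m - i - 1))%:R : int).
  rewrite big_distrr; apply: eq_bigr => i _ /=.
  by rewrite /bump /= add1n doubleS !exprS subSS !mulrA.
rewrite IH subn0 subSS subn0.
have := congr1 (fun n : nat => n%:R : int) (bin_rec m); rewrite /= natrD !natrM => H.
rewrite doubleS !exprS.
have E : ('C((m.+1).*2, m.+1))%:R = 4%:R * ('C(m.*2, m))%:R - 2%:R * (catalan m)%:R :> int.
  by rewrite -H addrK.
rewrite -doubleS E.
have -> : (4 : int) = 4%:R by [].
have -> : (2 : int) = 2%:R by [].
lra.
Qed.

Theorem corollary8p6 (beta : seq nat) :
  is_composition beta -> (0 < sumn beta)%N -> ~~ odd (sumn beta) ->
  \sum_(alpha <- compositions (sumn beta) |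
          refines alpha beta && odd (head 0%N alpha) && odd (last 0%N alpha))
     ((-1) ^+ k_e alpha * (2 ^+ (k_o beta - k_o alpha + 1)%N)
        * (catalan ((k_o alpha)./2 - 1)%N)%:R : int)
  = (2 ^+ k_o beta - ('C(k_o beta, (k_o beta)./2))%:R : int).
Proof.
case: beta => [|b r] Hc Hpos Hev; first by move: Hpos; rewrite ltnn.
set f := fun j : nat => (2 ^+ (k_o (b :: r) - j + 1)%N * (catalan (j./2 - 1))%:R : int).
rewrite big_mkcond.
rewrite (eq_bigr (fun a => if refines a (b :: r) then
   (if odd (head 0%N a) && odd (last 0%N a) then (-1) ^+ k_e a * f (k_o a) else 0)
   else 0)); last first.
  by move=> a _; case: (refines a (b :: r)) => //=; rewrite /f mulrA.
rewrite -big_mkcond sum_refines //.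
rewrite H_lem.
have Hn : ~~ odd (k_o (b :: r)) by rewrite -odd_sumn.
set n := k_o (b :: r) in f Hn *.
have En : n = (n./2).*2.
  by rewrite -{1}(odd_double_half n) (negbTE Hn).
set m := n./2 in En *.
rewrite En uphalf_double -cat_sum.
apply: eq_bigr => i _; rewrite /f.
have Hi : (i.*2 <= m.*2)%N by rewrite leq_double ltnW.
by rewrite {1}En subKn // addn1 -doubleB doubleK.
Qed.
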